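(* Let $\mathcal{H}$ be a hypertree. Then the edges of $Comp(\mathcal{H})$ are exactly the nonempty subsets of $V(\mathcal{H})$ that induce a subtree of every host tree of $\mathcal{H}$. Additionally, if $\mathcal{H}'$ is a hypertree equivalent to $\mathcal{H}$, then $E(Simp(\mathcal{H}'))\subseteq E(Comp(\mathcal{H}))$.
   Context: A hypergraph $\mathcal{H}$ has a finite vertex set $V(\mathcal{H})$ and a finite family $E(\mathcal{H})$ (repetitions allowed) of nonempty subsets (edges). A host tree of $\mathcal{H}$ is a tree with vertex set $V(\mathcal{H})$ in which every edge induces a connected subgraph; $\mathcal{H}$ is a hypertree if it has one. Two hypergraphs on the same vertex set are equivalent if they have the same host trees. $Simp(\mathcal{H})$ is obtained from $\mathcal{H}$ by deleting repeated edges. A union of sets is connected if the intersection graph of the sets is connected. $Comp(\mathcal{H})$ is the hypergraph without repeated edges on $V(\mathcal{H})$ whose edges are $V(\mathcal{H})$, all one-element subsets, and all proper subsets of $V(\mathcal{H})$ obtainable from edges of $\mathcal{H}$ by repeated nonempty intersections and connected unions. *)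

(* Defs.v *)
From mathcomp Require Import all_boot.
Set Implicit Arguments. Unset Strict Implicit. Unset Printing Implicit Defensive.

Section Hyper.
Variable V : finType.

Definition restr {T : finType} (S : {set T}) (e : rel T) : rel T :=
  fun x y => [&& x \in S, y \in S & e x y].

Definition connected_on {T : finType} (S : {set T}) (e : rel T) : Prop :=
  forall x y, x \in S -> y \in S -> connect (restr S e) x y.

(* The subgraph of e induced by S has no cycle (cycle = >= 3 distinct vertices). *)
Definition acyclic_on (S : {set V}) (e : rel V) : Prop :=
  forall c : seq V, ucycle (restr S e) c -> size c <= 2.

Definition is_tree_on (S : {set V}) (e : rel V) : Prop :=
  [/\ S != set0, connected_on S e & acyclic_on S e].

Definition is_graph (e : rel V) : Prop := symmetric e /\ irreflexive e.

Definition hypergraph (E : seq {set V}) : Prop := all (fun A => A != set0) E.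

Definition host_tree (E : seq {set V}) (T : rel V) : Prop :=
  [/\ is_graph T, is_tree_on setT T & forall A, A \in E -> connected_on A T].

Definition hypertree (E : seq {set V}) : Prop := exists T, host_tree E T.

Definition equivalent (E E' : seq {set V}) : Prop :=
  forall T, host_tree E T <-> host_tree E' T.

Inductive obtainable (E : seq {set V}) : {set V} -> Prop :=
| obt_edge A : A \in E -> obtainable E A
| obt_inter (F : {set {set V}}) : F != set0 -> (forall A, A \in F -> obtainable E A) ->
    \bigcap_(A in F) A != set0 -> obtainable E (\bigcap_(A in F) A)
| obt_union (F : {set {set V}}) : F != set0 -> (forall A, A \in F -> obtainable E A) ->
    connected_on F (fun A B => A :&: B != set0) -> obtainable E (\bigcup_(A in F) A).

(* Edges of Comp(H) (as a set, no repetitions). *)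
Definition comp_edge (E : seq {set V}) (S : {set V}) : Prop :=
  S = setT \/ (exists x, S = [set x]) \/ (S \proper setT /\ obtainable E S).

End Hyper.

(* Main.v *)
Require Import Defs.
From mathcomp Require Import all_boot.

Section Aux.
Local Set Implicit Arguments. Local Unset Strict Implicit.
Variable V : finType.
Implicit Types (e : rel V) (S A B : {set V}).

Definition epair (u v x y : V) : bool := ((x == u) && (y == v)) || ((x == v) && (y == u)).
Definition rdel e (u v : V) : rel V := fun x y => e x y && ~~ epair u v x y.

Lemma epairC u v x y : epair u v x y = epair v u x y.
Proof. by rewrite /epair orbC. Qed.

Lemma epair_sym u v x y : epair u v x y = epair u v y x.
Proof. by rewrite /epair orbC andbC [(y == v) && _]andbC. Qed.

Lemma path_notpair z t x s : z \notin x :: s -> path (fun p q => ~~ epair z t p q) x s.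
Proof.
elim: s x => [|y s IH] x //= H.
have zx : z != x by apply: contra H => /eqP ->; rewrite mem_head.
have zys : z \notin y :: s by apply: contra H => h; rewrite inE h orbT.
have zy : z != y by apply: contra zys => /eqP ->; rewrite mem_head.
rewrite IH // andbT /epair.
by rewrite eq_sym (negbTE zx) andFb [y == z]eq_sym (negbTE zy) andbF.
Qed.

Lemma path_and e f x s : path e x s -> path f x s -> path (fun p q => e p q && f p q) x s.
Proof. by move=> h1 h2; have := path_relI e f x s; rewrite h1 h2 /=. Qed.

Lemma restrT e : restr setT e =2 e.
Proof. by move=> x y; rewrite /restr !in_setT. Qed.

Lemma path_restr S e x s : path (restr S e) x s -> x \in S -> all (fun y => y \in S) s.
Proof.
elim: s x => [|y s IH] x //= /andP[/and3P[_ yS _] ps] _.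
by rewrite yS (IH y).
Qed.

Lemma path_restr_sub S e x s : path (restr S e) x s -> path e x s.
Proof. by apply: sub_path => p q /and3P[]. Qed.

Lemma path_to_restr S e x s : path e x s -> x \in S -> all (fun y => y \in S) s ->
  path (restr S e) x s.
Proof.
elim: s x => [|y s IH] x //= /andP[exy ps] xS /andP[yS aS].
by rewrite /restr xS yS exy /= IH.
Qed.

Lemma no_detour e x p : symmetric e -> acyclic_on setT e -> path e x p ->
  uniq (x :: p) -> e x (last x p) -> size p <= 1.
Proof.
move=> sy ac pp up exl.
have : ucycle (restr setT e) (x :: p).
  rewrite /ucycle up andbT (eq_cycle (restrT e)) /= rcons_path pp /=.
  by rewrite sy.
by move/ac.
Qed.

Lemma cut e u v : is_graph e -> acyclic_on setT e -> e u v -> ~ connect (rdel e u v) u v.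
Proof.
move=> [sy ir] ac euv /connectP[p pp vl]; rewrite vl in euv; move: euv vl.
case: (shortenP pp) => p' pp' up' _ euv vl.
have ep' : path e u p' by apply: sub_path pp' => ? ? /andP[].
have := no_detour sy ac ep' up' euv.
case: p' pp' up' euv vl {ep'} => [|w [|]] //=.
  by rewrite ir.
move=> /andP[/andP[_ H]] _ _ _ vw _; move: H; by rewrite vw /epair !eqxx.
Qed.

Lemma rdel_sym e u v : symmetric e -> symmetric (rdel e u v).
Proof. by move=> sy x y; rewrite /rdel sy epair_sym. Qed.

Lemma path_rdel e u v x s : path e x s -> u \notin x :: s -> path (rdel e u v) x s.
Proof. move=> p1 /(path_notpair v) p2; exact: path_and p1 p2. Qed.

Lemma convex e B x p : is_graph e -> acyclic_on setT e -> connected_on B e ->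
  path e x p -> uniq (x :: p) -> x \in B -> last x p \in B -> all (fun y => y \in B) p.
Proof.
move=> [sy ir] ac cB; elim: p x => [|w p IH] x //= /andP[exw pp] /andP[xn up] xB lB.
case wB: (w \in B); first by rewrite (IH w).
exfalso; apply: (cut (conj sy ir) ac exw).
have h1 : connect (rdel e x w) x (last w p).
  apply: (connect_sub (e := restr B e)); last exact: cB.
  move=> a b /and3P[aB bB eab]; apply: connect1; rewrite /rdel eab /epair /=.
  by apply/negP => /orP[] /andP[/eqP Ha /eqP Hb]; subst a b; rewrite wB in aB bB.
have h2 : connect (rdel e x w) w (last w p).
  by apply/connectP; exists p => //; apply: path_rdel.
apply: connect_trans h1 _; rewrite (sym_connect_sym (rdel_sym x w sy)); exact: h2.
Qed.

Lemma connect_mono e A B x y : A \subset B -> connect (restr A e) x y -> connect (restr B e) x y.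
Proof.
move=> sAB; apply: connect_sub => a b /and3P[aA bA eab]; apply: connect1.
by rewrite /restr (subsetP sAB _ aA) (subsetP sAB _ bA) eab.
Qed.

Lemma tree_on_of e S : is_graph e -> acyclic_on setT e -> S != set0 -> connected_on S e ->
  is_tree_on S e.
Proof.
move=> ge ac S0 cS; split => // c /andP[cc uc]; apply: ac; rewrite /ucycle uc andbT.
by apply: sub_cycle cc => a b /and3P[_ _ eab]; rewrite /restr !in_setT.
Qed.

Lemma inter_conn e (F : {set {set V}}) : is_graph e -> acyclic_on setT e -> F != set0 ->
  (forall A, A \in F -> connected_on A e) -> connected_on (\bigcap_(A in F) A) e.
Proof.
move=> ge ac /set0Pn[A0 A0F] cF x y /bigcapP xI /bigcapP yI.
have /connectP[p pp yl] := cF A0 A0F x y (xI _ A0F) (yI _ A0F).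
move: (yI); rewrite yl; case: (shortenP pp) => p' pp' up' _ yI'.
have ep' := path_restr_sub pp'.
apply/connectP; exists p' => //; apply: path_to_restr => //; first by apply/bigcapP.
apply/allP => z zp; apply/bigcapP => A AF.
have := convex ge ac (cF A AF) ep' up' (xI _ AF) (yI' _ AF); move/allP; exact.
Qed.

Lemma union_conn e (F : {set {set V}}) :
  (forall A, A \in F -> connected_on A e) ->
  connected_on F (fun A B => A :&: B != set0) -> connected_on (\bigcup_(A in F) A) e.
Proof.
move=> cF cFF x y /bigcupP[A1 A1F xA1] /bigcupP[A2 A2F yA2].
have /connectP[q qp ql] := cFF A1 A2 A1F A2F.
elim: q A1 A1F x xA1 qp ql => [|B q IH] A1 A1F x xA1 /=.
  move=> _ e12; subst A2; apply: (connect_mono (A := A1)); last exact: cF.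
  by apply: (bigcup_max A1).
move=> /andP[/and3P[_ BF /set0Pn[z /setIP[zA1 zB]]] qp] ql.
apply: (connect_trans (y := z)); last exact: (IH B BF z zB qp ql).
apply: (connect_mono (A := A1)); last exact: cF.
by apply: (bigcup_max A1).
Qed.

Lemma ucycleT e c : ucycle (restr setT e) c = ucycle e c.
Proof. by rewrite /ucycle (eq_cycle (restrT e)). Qed.

Lemma acyc_add e a b : symmetric e -> acyclic_on setT (rdel e a b) ->
  ~ connect (rdel e a b) a b -> acyclic_on setT e.
Proof.
move=> sy ac nc c; rewrite ucycleT => uc; case: (leqP (size c) 2) => // c3; exfalso.
have ac' : forall c', ucycle (rdel e a b) c' -> size c' <= 2.
  by move=> c' h; apply: ac; rewrite ucycleT.
case ac_: (a \in c); last first.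
  case: c uc c3 ac_ => [|x p] // /andP[cc ucc] c3 ac_.
  have : size (x :: p) <= 2; last by rewrite leqNgt c3.
  apply: ac'; rewrite /ucycle ucc andbT /=.
  apply: path_rdel; first exact: cc.
  by rewrite -cats1 -cat_cons mem_cat ac_ /= inE; apply/negP => /eqP ax; move: ac_; rewrite ax mem_head.
case: (rot_to ac_) => i q rq.
have : ucycle e (a :: q) by rewrite -rq rot_ucycle.
have : 2 < size (a :: q) by rewrite -rq size_rot.
case: q {rq} => [|y r] // s3.
have cE : forall f, cycle f [:: a, y & r] = f a y && path f y (rcons r a) by [].
rewrite /ucycle cE rcons_path => /andP[/and3P[eay pyr ela]]; clear cE.
rewrite [uniq _]/= !inE negb_or => /and3P[/andP[ay anr] ynr ur].
have rn : r != [::] by case: r s3 {pyr ela anr ynr ur}.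
have lr : last y r \in r by case: r rn {pyr ela anr ynr ur s3} => // r0 r' _; rewrite /= mem_last.
case yb: (y == b).
  move/eqP: yb => yb; subst y.
  apply: nc; rewrite (sym_connect_sym (rdel_sym a b sy)); apply/connectP.
  exists (rcons r a); last by rewrite last_rcons.
  rewrite rcons_path path_rdel ?inE ?negb_or ?anr ?andbT //=.
  rewrite /rdel ela /epair; apply/negP => /orP[] /andP[/eqP h _].
    by move: lr; rewrite h (negbTE anr).
  by move: lr; rewrite h (negbTE ynr).
case zb: (last y r == b).
  apply: nc; apply/connectP; exists (y :: r); last by rewrite /= (eqP zb).
  rewrite /= path_rdel ?inE ?negb_or ?anr ?andbT //= ?ay //.
  rewrite /rdel eay /epair yb eqxx /=.
  by rewrite [y == a]eq_sym (negbTE ay) andbF.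
have : size [:: a, y & r] <= 2; last by rewrite leqNgt s3.
apply: ac'; rewrite /ucycle /= !inE negb_or ay anr ynr ur andbT rcons_path.
rewrite /rdel eay ela /epair yb eqxx /= [y == a]eq_sym (negbTE ay) andbF zb /= andbT.
have -> : (last y r == a) = false by apply/negP => /eqP h; move: lr; rewrite h (negbTE anr).
by rewrite path_rdel // inE negb_or ay.
Qed.

Lemma restr_sym S e : symmetric e -> symmetric (restr S e).
Proof. by move=> sy x y; rewrite /restr sy; case: (x \in S); case: (y \in S). Qed.

Lemma restr_eq S e f : e =2 f -> restr S e =2 restr S f.
Proof. by move=> h x y; rewrite /restr h. Qed.

Lemma rdelC e u v : rdel e u v =2 rdel e v u.
Proof. by move=> x y; rewrite /rdel epairC. Qed.

Lemma side_in e u v A w : symmetric e -> u != v -> ~ connect (rdel e u v) u v ->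
  connect (rdel e u v) u w -> u \in A -> w \in A -> connected_on A e ->
  connect (restr A (rdel e u v)) u w.
Proof.
move=> sy uv nc cw uA wA cA.
have /connectP[p pp wl] := cA u w uA wA; subst w.
move: cw wA; case: (shortenP pp) => p' pp' up' _ cw wA'.
apply/connectP; exists p' => //.
case: p' pp' up' wA' cw => [|z p''] //= /andP[/and3P[_ zA euz] pz] /andP[un up] wA' cw.
case zv: (z == v).
  move/eqP: zv => zv; subst z; exfalso; apply: nc.
  apply: (connect_trans cw); rewrite (sym_connect_sym (rdel_sym u v sy)).
  apply/connectP; exists p'' => //; apply: path_rdel; first exact: path_restr_sub pz.
  by rewrite inE in un.
rewrite /restr uA zA /rdel euz /epair zv eqxx /=.
have -> : (u == v) = false by apply/negbTE.
rewrite /=; apply: sub_path (path_and pz (path_notpair v (_ : u \notin z :: p''))) => //.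
by move=> x y /andP[/and3P[xA yA exy] nxy]; rewrite /restr xA yA /rdel exy nxy.
Qed.

Definition swapT e (u v a b : V) : rel V := fun x y => rdel e u v x y || epair a b x y.

Lemma swap (E : seq {set V}) e u v a b : host_tree E e -> e u v ->
  connect (rdel e u v) u a -> connect (rdel e u v) v b ->
  (forall A, A \in E -> u \in A -> v \in A -> (a \in A) && (b \in A)) ->
  host_tree E (swapT e u v a b).
Proof.
move=> [[sy ir] [T0 cT acT] cE] euv cua cvb hE.
have nc := cut (conj sy ir) acT euv.
have syR : symmetric (rdel e u v) by apply: rdel_sym.
have cRs := sym_connect_sym syR.
have uv : u != v by apply/negP => /eqP h; move: euv; rewrite h ir.
have nab : ~ connect (rdel e u v) a b.
  by move=> h; apply: nc; apply: (connect_trans cua); apply: (connect_trans h); rewrite cRs.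
have ab : a != b by apply/negP => /eqP h; apply: nab; rewrite h connect0.
set T' := swapT e u v a b.
have syT' : symmetric T' by move=> x y; rewrite /T' /swapT (rdel_sym u v sy) epair_sym.
have cT's := sym_connect_sym syT'.
have RT' : forall x y, connect (rdel e u v) x y -> connect T' x y.
  by apply: connect_sub => x y h; apply: connect1; rewrite /T' /swapT h.
have T'ab : T' a b by rewrite /T' /swapT /epair !eqxx orbT.
have cuv : connect T' u v.
  apply: (connect_trans (RT' _ _ cua)); apply: (connect_trans (connect1 T'ab)).
  by rewrite cT's; apply: RT'.
split; [split | split | ].
- exact: syT'.
- move=> x; rewrite /T' /swapT /rdel ir /= /epair.
  by apply/negP => /orP[] /andP[/eqP h1 /eqP h2]; move: ab; rewrite -h1 -h2 eqxx.
- exact: T0.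
- move=> x y _ _; rewrite (eq_connect (restrT T')).
  have := cT x y (in_setT x) (in_setT y); rewrite (eq_connect (restrT e)).
  apply: connect_sub => p q epq.
  case epq' : (epair u v p q).
    by case/orP: epq' => /andP[/eqP -> /eqP ->] //; rewrite cT's.
  by apply: connect1; rewrite /T' /swapT /rdel epq epq'.
- apply: (acyc_add syT' (a := a) (b := b)).
    move=> c /andP[cc uc]; apply: acT; rewrite /ucycle uc andbT.
    apply: sub_cycle cc => x y /and3P[_ _ /andP[/orP[/andP[h _]|h] nh]].
      by rewrite /restr !in_setT.
    by rewrite h in nh.
  move=> h; apply: nab; move: h; apply: connect_sub => x y /andP[/orP[h|h] nh].
    exact: connect1.
  by rewrite h in nh.
- move=> A AE x y xA yA.
  have := cE A AE x y xA yA; apply: connect_sub => p q /and3P[pA qA epq].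
  case epq' : (epair u v p q); last first.
    by apply: connect1; rewrite /restr pA qA /T' /swapT /rdel epq epq'.
  have [uA vA] : (u \in A) /\ (v \in A).
    by case/orP: epq' => /andP[/eqP h1 /eqP h2]; subst p q.
  have /andP[aA bA] := hE A AE uA vA.
  have ST : forall x y, connect (restr A (rdel e u v)) x y -> connect (restr A T') x y.
    apply: connect_sub => x' y' /and3P[xA' yA' h]; apply: connect1.
    by rewrite /restr xA' yA' /T' /swapT h.
  have ca : connect (restr A T') u a.
    by apply: ST; apply: side_in => //; apply: cE.
  have cb : connect (restr A T') v b.
    apply: ST; rewrite (eq_connect (restr_eq A (rdelC e u v))).
    have nc' : ~ connect (rdel e v u) v u.
      by rewrite (eq_connect (rdelC e v u)) cRs.
    have cvb' : connect (rdel e v u) v b by rewrite (eq_connect (rdelC e v u)).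
    by apply: side_in nc' cvb' vA bA _ => //; [rewrite eq_sym | apply: cE].
  have cAs := sym_connect_sym (restr_sym A syT').
  have cAuv : connect (restr A T') u v.
    apply: (connect_trans ca); apply: (connect_trans (y := b)).
      by apply: connect1; rewrite /restr aA bA T'ab.
    by rewrite cAs.
  by case/orP: epq' => /andP[/eqP -> /eqP ->] //; rewrite cAs.
Qed.

Lemma side_split e u v : connected_on setT e -> e u v ->
  forall w, connect (rdel e u v) u w \/ connect (rdel e u v) v w.
Proof.
move=> cT euv w; have := cT u w (in_setT u) (in_setT w).
rewrite (eq_connect (restrT e)) => /connectP[p pp ->].
have gen : forall q x, path e x q ->
    connect (rdel e u v) u x \/ connect (rdel e u v) v x ->
    connect (rdel e u v) u (last x q) \/ connect (rdel e u v) v (last x q).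
  elim=> [|z q IH] x //= /andP[exz pz] Qx; apply: IH => //.
  case ez: (epair u v x z).
    by case/orP: ez => /andP[_ /eqP ->]; [right|left]; apply: connect0.
  have h : rdel e u v x z by rewrite /rdel exz ez.
  by case: Qx => h'; [left|right]; apply: (connect_trans h'); apply: connect1.
by apply: gen pp _; left; apply: connect0.
Qed.

Lemma swap_disc E e u v a b S : host_tree E e -> e u v ->
  connect (rdel e u v) u a -> connect (rdel e u v) v b ->
  u \in S -> v \in S -> (a \notin S) || (b \notin S) ->
  ~ connected_on S (swapT e u v a b).
Proof.
move=> [[sy ir] [T0 cT acT] cE] euv cua cvb uS vS nab cS.
apply: (cut (conj sy ir) acT euv); move: (cS u v uS vS); apply: connect_sub.
move=> p q /and3P[pS qS /orP[h|h]]; first exact: connect1.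
by exfalso; case/orP: h nab => /andP[/eqP h1 /eqP h2]; subst p q; rewrite pS qS.
Qed.

Lemma key (E : seq {set V}) e S u v : host_tree E e ->
  (forall e', host_tree E e' -> connected_on S e') ->
  u \in S -> v \in S -> e u v ->
  forall x, (forall A, A \in E -> u \in A -> v \in A -> x \in A) -> x \in S.
Proof.
move=> he hS uS vS euv x hx; apply/negPn/negP => xS.
have [[sy ir] [T0 cT acT] cE] := he.
case: (side_split cT euv x) => cx.
  have hE : forall A, A \in E -> u \in A -> v \in A -> (x \in A) && (v \in A).
    by move=> A AE uA vA; rewrite hx.
  apply: (swap_disc he euv cx (connect0 _ v) uS vS); first by rewrite xS.
  exact: hS (swap he euv cx (connect0 _ v) hE).
have hE : forall A, A \in E -> u \in A -> v \in A -> (u \in A) && (x \in A).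
  by move=> A AE uA vA; rewrite hx // uA.
apply: (swap_disc he euv (connect0 _ u) cx uS vS); first by rewrite xS orbT.
exact: hS (swap he euv (connect0 _ u) cx hE).
Qed.

Lemma obt_conn (E : seq {set V}) e S : hypergraph E -> host_tree E e -> obtainable E S ->
  S != set0 /\ connected_on S e.
Proof.
move=> hy he; have [ge [T0 cT acT] cE] := he.
elim=> [A AE | F F0 _ IH I0 | F F0 _ IH cF].
- by split; [exact: (allP hy A AE) | exact: cE].
- by split => //; apply: inter_conn => // A AF; case: (IH A AF).
- split; last by apply: union_conn => // A AF; case: (IH A AF).
  case/set0Pn: F0 => A AF; case: (IH A AF) => /set0Pn[x xA] _.
  by apply/set0Pn; exists x; apply/bigcupP; exists A.
Qed.

Lemma first_step e S z t : z != t -> connect (restr S e) z t -> exists w, restr S e z w.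
Proof.
move=> zt /connectP[[|w p] /=]; first by move=> _ h; rewrite h eqxx in zt.
by move=> /andP[h _] _; exists w.
Qed.
End Aux.

Theorem mainTheorem5 (V : finType) (E : seq {set V}) :
  hypergraph E -> hypertree E ->
  (forall S : {set V},
     comp_edge E S <-> (S != set0 /\ forall T, host_tree E T -> is_tree_on S T)) /\
  (forall E' : seq {set V}, hypergraph E' -> hypertree E' -> equivalent E E' ->
     forall A, A \in E' -> comp_edge E A).
Proof.
move=> hy [T0 hT0].
have [[sy0 ir0] [V0 cT0 acT0] cE0] := hT0.
have P1 : forall S : {set V},
     comp_edge E S <-> (S != set0 /\ forall T, host_tree E T -> is_tree_on S T).
  move=> S; split.
    case=> [->|[[x ->]|[_ oS]]].
    - split => // T [ge [T1 cT acT] _]; exact: tree_on_of.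
    - split; first by apply/set0Pn; exists x; rewrite in_set1.
      move=> T [ge [T1 cT acT] _]; apply: tree_on_of => //.
        by apply/set0Pn; exists x; rewrite in_set1.
      by move=> y z /set1P -> /set1P ->; apply: connect0.
    - case: (obt_conn hy hT0 oS) => S0 _; split => // T hT.
      case: (obt_conn hy hT oS) => _ cS; case: hT => ge [_ _ acT] _.
      exact: tree_on_of.
  move=> [S0 hS].
  have hS' : forall T, host_tree E T -> connected_on S T by move=> T /hS [].
  case ST: (S == setT); first by left; apply/eqP.
  case S1: (#|S| == 1); first by right; left; apply/cards1P.
  right; right; split; first by rewrite properT ST.
  have : 1 < #|S|.
    by rewrite ltn_neqAle eq_sym S1 /= card_gt0.
  case/card_gt1P => x0 [y0 [x0S y0S xy0]].
  have step : forall z, z \in S -> exists w, restr S T0 z w.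
    move=> z zS; case zx: (z == x0).
      apply: (first_step (t := y0)); first by rewrite (eqP zx).
      exact: hS' hT0 z y0 zS y0S.
    apply: (first_step (t := x0)); first by rewrite zx.
    exact: hS' hT0 z x0 zS x0S.
  pose Fm (u v : V) := [set A0 : {set V} | (A0 \in E) && (u \in A0) && (v \in A0)].
  pose D (u v : V) := \bigcap_(A in Fm u v) A.
  have uD : forall u v, u \in D u v by move=> u v; apply/bigcapP => A; rewrite inE => /andP[/andP[]].
  have vD : forall u v, v \in D u v by move=> u v; apply/bigcapP => A; rewrite inE => /andP[].
  have keyD : forall u v, u \in S -> v \in S -> T0 u v -> D u v \subset S.
    move=> u v uS vS euv; apply/subsetP => x /bigcapP xD.
    apply: (key hT0 hS' uS vS euv) => A AE uA vA; by apply: xD; rewrite inE AE uA vA.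
  have Dobt : forall u v, u \in S -> v \in S -> T0 u v -> obtainable E (D u v).
    move=> u v uS vS euv; apply: (@obt_inter _ E (Fm u v)).
    - apply/negP => /eqP F0; move/negP: ST; apply; rewrite eqEsubset subsetT /=.
      apply: subset_trans (keyD u v uS vS euv); apply/subsetP => x _.
      by apply/bigcapP => A; rewrite F0 inE.
    - by move=> A; rewrite inE => /andP[/andP[AE _] _]; apply: obt_edge.
    - by apply/set0Pn; exists u; apply: uD.
  pose G := [set X : {set V} | [exists u, exists v, [&& u \in S, v \in S, T0 u v & X == D u v]]].
  have GE : \bigcup_(X in G) X = S.
    apply/eqP; rewrite eqEsubset; apply/andP; split.
      apply/bigcupsP => X; rewrite inE => /existsP[u /existsP[v /and4P[uS vS euv /eqP ->]]].
      exact: keyD.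
    apply/subsetP => z zS; have [w /and3P[_ wS ezw]] := step z zS.
    apply/bigcupP; exists (D z w) => //; rewrite inE; apply/existsP; exists z; apply/existsP; exists w.
    by rewrite zS wS ezw eqxx.
  rewrite -GE; apply: obt_union.
  - have [w /and3P[_ wS ezw]] := step x0 x0S.
    apply/set0Pn; exists (D x0 w); rewrite inE; apply/existsP; exists x0; apply/existsP; exists w.
    by rewrite x0S wS ezw eqxx.
  - move=> X; rewrite inE => /existsP[u /existsP[v /and4P[uS vS euv /eqP ->]]].
    exact: Dobt.
  - have gen : forall p z, z \in S -> path (restr S T0) z p ->
      forall X Y, X \in G -> Y \in G -> z \in X -> last z p \in Y ->
      connect (restr G (fun A B => A :&: B != set0)) X Y.
      elim=> [|w p IH] z zS /=.
        move=> _ X Y XG YG zX zY; apply: connect1; rewrite /restr XG YG /=.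
        by apply/set0Pn; exists z; rewrite inE zX zY.
      move=> /andP[/and3P[_ wS ezw] pw] X Y XG YG zX lY.
      have DG : D z w \in G.
        by rewrite inE; apply/existsP; exists z; apply/existsP; exists w; rewrite zS wS ezw eqxx.
      apply: (connect_trans (y := D z w)).
        apply: connect1; rewrite /restr XG DG /=.
        by apply/set0Pn; exists z; rewrite inE zX uD.
      exact: IH wS pw _ _ DG YG (vD z w) lY.
    move=> X Y XG YG.
    have := XG; rewrite inE => /existsP[u1 /existsP[v1 /and4P[u1S _ _ /eqP X1]]].
    have := YG; rewrite inE => /existsP[u2 /existsP[v2 /and4P[u2S _ _ /eqP Y1]]].
    have /connectP[p pp pl] := hS' T0 hT0 u1 u2 u1S u2S.
    apply: (gen p u1 u1S pp X Y XG YG); first by rewrite X1 uD.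
    by rewrite -pl Y1 uD.
split => // E' hy' [T1 hT1] eqE A AE'.
apply/P1; split; first exact: (allP hy' A AE').
move=> T hT; have [ge [T2 cT acT] cE] := hT.
apply: tree_on_of => //; first exact: (allP hy' A AE').
by have [_ _ cE'] := (eqE T).1 hT; apply: cE'.
Qed.
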